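(* Let $n\ge2$ be an integer and $\tau=\inf\{t\ge0: p_t\ge n\}$ for the Markov chain $(p_t)$ with $p_0=1$ defined in the context. Then $\mathbb{E}[\tau]\le (n^2-n+2)/2$.
   Context: $(p_t)_{t\ge0}$ is a time-homogeneous Markov chain on the positive integers with $p_0=1$ and transitions: if $p_t=p\ge2$, then $\mathbb{P}(p_{t+1}=p+j)=(1/2)^{j+2}$ for $j\in\{-1,0,1,2,\dots\}$; if $p_t=1$, then $\mathbb{P}(p_{t+1}=1+j)=(1/2)^{j+1}$ for $j\in\{0,1,2,\dots\}$. (It models the position of a $*$ symbol, started in the first position, in the deterministic-scan bounding chain; $\tau$ is the number of scans until it reaches position $n$.) *)

(* Defs.v *)
From Stdlib Require Import Reals Lra Lia Bool.
From Coquelicot Require Import Coquelicot.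
Open Scope R_scope.

(* One-step transition probability P(p_{t+1} = q | p_t = p) for p, q >= 1.
   If p >= 2: P(p -> p + j) = (1/2)^(j+2) for j >= -1, i.e. q >= p-1,
              exponent j + 2 = q + 2 - p.
   If p = 1:  P(1 -> 1 + j) = (1/2)^(j+1) for j >= 0, i.e. exponent q. *)
Definition trans (p q : nat) : R :=
  if (p =? 0)%nat then 0
  else if (q =? 0)%nat then 0
  else if (p =? 1)%nat then (1/2) ^ q
  else if (p - 1 <=? q)%nat then (1/2) ^ (q + 2 - p)
  else 0.

Fixpoint sumk (m : nat) (f : nat -> R) : R :=
  match m with
  | O => 0
  | S m' => sumk m' f + f m
  end.

(* killed t k = P(p_t = k and p_s < n for all s <= t)  (i.e. P(p_t = k, tau > t)),
   for the chain started at p_0 = 1; supported on 1 <= k <= n-1. *)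
Fixpoint killed (n t k : nat) : R :=
  match t with
  | O => if (andb (k =? 1)%nat (k <? n)%nat) then 1 else 0
  | S t' => if (andb (1 <=? k)%nat (k <? n)%nat)
            then sumk (n - 1) (fun j => killed n t' j * trans j k)
            else 0
  end.

Definition tail_prob (n t : nat) : R := sumk (n - 1) (fun k => killed n t k).

(* E[tau] = sum_{t >= 0} P(tau > t)  (tail-sum formula, valid in [0, +oo]);
   E[tau] < +oo iff this series converges. *)

(* Main.v *)
Require Import Defs.
From Stdlib Require Import Reals Lra Lia Bool.
From Coquelicot Require Import Coquelicot.
Open Scope R_scope.

Lemma sumk_ext m f g : (forall j, (1 <= j <= m)%nat -> f j = g j) -> sumk m f = sumk m g.
Proof.
  induction m; simpl; intros H; auto.
  rewrite IHm; [rewrite H; [reflexivity|lia]|]. intros j Hj; apply H; lia.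
Qed.

Lemma sumk_plus m f g : sumk m (fun j => f j + g j) = sumk m f + sumk m g.
Proof. induction m; simpl; [lra|rewrite IHm; lra]. Qed.

Lemma sumk_scal m c f : sumk m (fun j => c * f j) = c * sumk m f.
Proof. induction m; simpl; [lra|rewrite IHm; lra]. Qed.

Lemma sumk_zero m : sumk m (fun _ => 0) = 0.
Proof. induction m; simpl; [lra|rewrite IHm; lra]. Qed.

Lemma sumk_exch m l h :
  sumk m (fun k => sumk l (fun j => h j k)) = sumk l (fun j => sumk m (fun k => h j k)).
Proof.
  induction m; simpl.
  - rewrite sumk_zero; reflexivity.
  - rewrite IHm, <- sumk_plus. reflexivity.
Qed.

Lemma sumk_nonneg m f : (forall j, (1 <= j <= m)%nat -> 0 <= f j) -> 0 <= sumk m f.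
Proof.
  induction m; simpl; intros H; [lra|].
  assert (0 <= sumk m f) by (apply IHm; intros; apply H; lia).
  assert (0 <= f (S m)) by (apply H; lia). lra.
Qed.

Lemma sumk_one m g : (1 <= m)%nat -> (forall j, j <> 1%nat -> g j = 0) -> sumk m g = g 1%nat.
Proof.
  intros Hm Hg; induction m; [lia|].
  destruct m; simpl.
  - lra.
  - simpl in IHm. rewrite IHm by lia. rewrite (Hg (S (S m))) by lia. lra.
Qed.

Lemma trans_nonneg p q : 0 <= trans p q.
Proof.
  unfold trans.
  destruct (p =? 0)%nat; [lra|]. destruct (q =? 0)%nat; [lra|].
  destruct (p =? 1)%nat; [apply pow_le; lra|].
  destruct (p - 1 <=? q)%nat; [apply pow_le; lra|lra].
Qed.

Lemma killed_nonneg n t k : 0 <= killed n t k.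
Proof.
  revert k; induction t; intros k; simpl.
  - destruct (_ && _); lra.
  - destruct (_ && _); [|lra].
    apply sumk_nonneg; intros j _. apply Rmult_le_pos; [apply IHt|apply trans_nonneg].
Qed.

Lemma killed_S n t k : (1 <= k < n)%nat ->
  killed n (S t) k = sumk (n - 1) (fun j => killed n t j * trans j k).
Proof.
  intros Hk. change (killed n (S t) k) with
    (if andb (1 <=? k)%nat (k <? n)%nat
            then sumk (n - 1) (fun j => killed n t j * trans j k) else 0).
  replace ((1 <=? k)%nat && (k <? n)%nat) with true
        by (symmetry; apply andb_true_iff; split; [apply Nat.leb_le|apply Nat.ltb_lt]; lia).
  reflexivity.
Qed.

Section Main.
Variable n : nat.
Hypothesis hn : (2 <= n)%nat.
Let N := INR n.
Definition Fr (x : R) := (N^2 - N + 3*x - x^2)/2.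
Definition Gr (x : R) := (N^2 - N + x - x^2)/2.
Definition Fk (k : nat) := Fr (INR k).

Lemma GF m : 2 * Gr (INR m) - Gr (INR (S m)) = Fk m.
Proof. unfold Fk, Fr, Gr; rewrite S_INR; field. Qed.

Lemma trans1 j : (1 <= j)%nat -> trans 1 j = (1/2)^j.
Proof. intros Hj; unfold trans; simpl. destruct j; [lia|reflexivity]. Qed.

Lemma sum1 M : sumk M (fun j => trans 1 j * Fk j) = Gr 1 - (1/2)^M * Gr (INR (S M)).
Proof.
  induction M; simpl sumk.
  - simpl. lra.
  - rewrite IHM, trans1 by lia. rewrite <- (GF (S M)). simpl pow. lra.
Qed.

Lemma transS p j : (1 <= j)%nat ->
  trans (S (S p)) j = if (S p <=? j)%nat then (1/2)^(j - p) else 0.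
Proof.
  intros Hj; unfold trans. destruct j; [lia|]. simpl Nat.eqb. cbv match.
  replace (S (S p) - 1)%nat with (S p) by lia.
  destruct (S p <=? S j)%nat; [|reflexivity].
  f_equal; lia.
Qed.

Lemma sum2 p i : sumk (p + i) (fun j => trans (S (S p)) j * Fk j)
   = Gr (INR (S p)) - (1/2)^i * Gr (INR (S (p + i))).
Proof.
  induction i.
  - rewrite Nat.add_0_r. simpl pow. rewrite Rmult_1_l, Rminus_diag.
    rewrite (sumk_ext _ _ (fun _ => 0)); [apply sumk_zero|].
    intros j Hj. rewrite transS by lia.
    replace (S p <=? j)%nat with false; [lra|symmetry; apply Nat.leb_gt; lia].
  - replace (p + S i)%nat with (S (p + i)) by lia. simpl sumk.
    rewrite IHi. rewrite transS by lia.
    replace (S p <=? S (p + i))%nat with true by (symmetry; apply Nat.leb_le; lia).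
    replace (S (p + i) - p)%nat with (S i) by lia.
    rewrite <- (GF (S (p + i))). simpl pow. lra.
Qed.

Lemma Gn : Gr (INR n) = 0.
Proof. unfold Gr, N. field. Qed.

Lemma keyA k : (1 <= k <= n - 1)%nat ->
  sumk (n - 1) (fun j => trans k j * Fk j) = Fk k - 1.
Proof.
  intros Hk. destruct k as [|[|p]]; [lia| |].
  - rewrite sum1. replace (S (n - 1)) with n by lia. rewrite Gn.
    unfold Fk, Fr, Gr. simpl INR. lra.
  - replace (n - 1)%nat with (p + (n - 1 - p))%nat by lia.
    rewrite sum2. replace (S (p + (n - 1 - p))) with n by lia. rewrite Gn.
    unfold Fk, Fr, Gr. rewrite (S_INR (S p)). field.
Qed.

Definition v t := sumk (n - 1) (fun k => killed n t k * Fk k).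

Lemma Fk_pos k : (1 <= k <= n - 1)%nat -> 0 <= Fk k.
Proof.
  intros Hk. unfold Fk, Fr, N.
  assert (H1 : (1 <= INR k)%R) by (apply (le_INR 1); lia).
  assert (H2 : (INR k + 1 <= INR n)%R) by (rewrite <- S_INR; apply le_INR; lia).
  nra.
Qed.

Lemma v_nonneg t : 0 <= v t.
Proof.
  apply sumk_nonneg; intros j Hj. apply Rmult_le_pos; [apply killed_nonneg|apply Fk_pos; auto].
Qed.

Lemma v_step t : v (S t) = v t - tail_prob n t.
Proof.
  unfold v, tail_prob.
  rewrite (sumk_ext _ _ (fun k => sumk (n - 1) (fun j => killed n t j * trans j k * Fk k))).
  2:{ intros k Hk. rewrite killed_S by lia.
      rewrite (Rmult_comm _ (Fk k)), <- sumk_scal. apply sumk_ext; intros; lra. }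
  rewrite sumk_exch.
  rewrite (sumk_ext _ _ (fun j => killed n t j * Fk j + (-1) * killed n t j)).
  - rewrite sumk_plus, sumk_scal. change (fun k : nat => killed n t k) with (killed n t). lra.
  - intros j Hj.
    rewrite (sumk_ext _ _ (fun k => killed n t j * (trans j k * Fk k))) by (intros; lra).
    rewrite sumk_scal, keyA by auto. lra.
Qed.

Lemma v0 : v 0 = Fk 1.
Proof.
  unfold v. rewrite (sumk_one _ (fun k => killed n 0 k * Fk k)).
  - simpl. replace (1 <? n)%nat with true by (symmetry; apply Nat.ltb_lt; lia). lra.
  - lia.
  - intros j Hj. simpl. replace (j =? 1)%nat with false by (symmetry; apply Nat.eqb_neq; auto).
    simpl; lra.
Qed.

Lemma partial T : sum_n (fun t => tail_prob n t) T = v 0 - v (S T).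
Proof.
  induction T.
  - rewrite sum_O, v_step. lra.
  - rewrite sum_Sn, IHT. rewrite (v_step (S T)). unfold plus; simpl. lra.
Qed.

End Main.

Theorem lemma5 (n : nat) (hn : (2 <= n)%nat) :
  ex_series (fun t => tail_prob n t) /\
  Series (fun t => tail_prob n t) <= (INR n ^ 2 - INR n + 2) / 2.
Proof.
  set (a := fun t => tail_prob n t).
  assert (Hb : forall T, sum_n a T <= Fk n 1).
  { intros T. unfold a. rewrite partial by auto. rewrite v0 by auto.
    pose proof (v_nonneg n hn (S T)). lra. }
  assert (Hi : forall T, sum_n a T <= sum_n a (S T)).
  { intros T. rewrite sum_Sn. unfold plus; simpl. unfold a, tail_prob.
    assert (0 <= sumk (n - 1) (fun k => killed n (S T) k))
      by (apply sumk_nonneg; intros; apply killed_nonneg). lra. }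
  destruct (ex_finite_lim_seq_incr _ _ Hi Hb) as [l Hl].
  assert (HS : Series a = l) by (unfold Series; rewrite (is_lim_seq_unique _ _ Hl); reflexivity).
  split.
  - exists l. exact Hl.
  - fold a. rewrite HS.
    assert (Hle := is_lim_seq_le _ _ _ _ Hb Hl (is_lim_seq_const (Fk n 1))).
    simpl in Hle. unfold Fk, Fr in Hle. simpl INR in Hle. lra.
Qed.
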